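(* Let $F=(A,R)$ be an abstract argumentation framework and $S\subseteq A$. Then $S$ is admissible in $F$ if and only if either $S=\emptyset$, or $S=S_1\cup S_2$ where $S_1$ is an initial set of $F$ and $S_2$ is an admissible set of the reduct $F^{S_1}$.
   Context: An abstract argumentation framework is a pair $F=(A,R)$ with $A$ a finite set of arguments and $R\subseteq A\times A$ (write $a\to b$ for $(a,b)\in R$). For $S\subseteq A$: $S^+=\{a\in A\mid \exists b\in S: b\to a\}$, $S^-=\{a\in A\mid \exists b\in S: a\to b\}$. $S$ is conflict-free if there are no $a,b\in S$ with $a\to b$. $S$ defends $b$ if for every $a$ with $a\to b$ there is $c\in S$ with $c\to a$. $S$ is admissible if it is conflict-free and defends all its elements. An initial set of $F$ is a non-empty admissible set $S$ such that no non-empty admissible $S'\subsetneq S$ exists. For $X\subseteq A$, $F|_X=(X,R\cap(X\times X))$. The $S$-reduct of $F$ is $F^{S}=F|_{A\setminus(S\cup S^+)}$. *)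

(* Defs.v *)
From mathcomp Require Import all_boot.
Set Implicit Arguments. Unset Strict Implicit. Unset Printing Implicit Defensive.

(* An abstract argumentation framework F = (A, R) over a finite universe T of
   possible arguments: A : {set T} is the (finite) set of arguments and
   R : rel T the attack relation; only attacks between members of A count,
   i.e. the attack relation of F is R ∩ (A × A). *)
Record AF (T : finType) := mkAF { args : {set T}; att : rel T }.

Section AFDefs.
Variable T : finType.
Implicit Types (F : AF T) (S : {set T}).

Definition attacks F (a b : T) : bool :=
  [&& a \in args F, b \in args F & att F a b].

Definition splus F S : {set T} :=
  [set a in args F | [exists b in S, attacks F b a]].

Definition sminus F S : {set T} :=
  [set a in args F | [exists b in S, attacks F a b]].

Definition conflict_free F S : Prop :=
  forall a b, a \in S -> b \in S -> ~~ attacks F a b.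

Definition defends F S (b : T) : Prop :=
  forall a, attacks F a b -> exists2 c, c \in S & attacks F c a.

Definition admissible F S : Prop :=
  S \subset args F /\ conflict_free F S /\ (forall b, b \in S -> defends F S b).

Definition initial F S : Prop :=
  admissible F S /\ S != set0 /\
  ~ (exists S', [/\ S' != set0, admissible F S' & S' \proper S]).

Definition restrict F (X : {set T}) : AF T :=
  mkAF X (fun a b => [&& a \in X, b \in X & attacks F a b]).

Definition reduct F S : AF T :=
  restrict F (args F :\: (S :|: splus F S)).

End AFDefs.

(* Main.v *)
Require Import Defs.
From Stdlib Require Import Classical.
From mathcomp Require Import all_boot.

Section Aux.
Variable T : finType.
Implicit Types (F : AF T) (S : {set T}).

Lemma att_red F S1 a b :
  attacks (reduct F S1) a b =
  [&& a \in args F :\: (S1 :|: splus F S1), b \in args F :\: (S1 :|: splus F S1)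
    & attacks F a b].
Proof.
rewrite /attacks /reduct /restrict /=.
by case: (a \in _); case: (b \in _).
Qed.

Lemma in_red F S1 x :
  (x \in args F :\: (S1 :|: splus F S1)) =
  [&& x \notin S1, ~~ [exists b in S1, attacks F b x] & x \in args F].
Proof.
rewrite !inE negb_or; case: (x \in args F); case: (x \in S1);
  case: [exists _ in _, _] => //=.
Qed.

Lemma att_args F a b : attacks F a b -> (a \in args F) && (b \in args F).
Proof. by case/and3P=> -> ->. Qed.

Lemma exists_initial F n : forall S, #|S| <= n -> admissible F S -> S != set0 ->
  exists S1, initial F S1 /\ S1 \subset S.
Proof.
elim: n => [|n IH] S hn hS hne.
  by move: hne; rewrite -card_gt0; case: #|S| hn.
case: (classic (initial F S)) => [hi|hni]; first by exists S.
have [S' [h1 h2 h3]] : exists S', [/\ S' != set0, admissible F S' & S' \proper S].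
  apply: NNPP => hno; apply: hni; by split.
have hc : #|S'| <= n.
  have := proper_card h3; move=> hlt; by rewrite -ltnS (leq_trans hlt).
have [S1 [hi hs]] := IH S' hc h2 h1.
exists S1; split => //; apply: subset_trans hs (proper_sub h3).
Qed.

End Aux.

Theorem theorem1 (T : finType) (F : AF T) (S : {set T}) :
  S \subset args F ->
  (admissible F S <->
   (S = set0 \/
    exists S1 S2 : {set T},
      [/\ S = S1 :|: S2, initial F S1 & admissible (reduct F S1) S2])).
Proof.
move=> hsub; split.
- move=> hS; case: (eqVneq S set0) => [->|hne]; first by left.
  right.
  have [S1 [hi hs]] := @exists_initial T F #|S| S (leqnn _) hS hne.
  have [[_ [cf1 def1]] _] := hi.
  have [_ [cf dS]] := hS.
  have key : forall x, x \in S -> x \notin S1 -> x \in args F :\: (S1 :|: splus F S1).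
    move=> x xS xn; rewrite in_red xn (subsetP hsub _ xS) andbT /=.
    apply/existsP => -[c /andP[cS1 hc]].
    by move: (cf c x (subsetP hs _ cS1) xS); rewrite hc.
  exists S1, (S :\: S1); split.
  + by apply/setP => x; rewrite !inE; case: (x \in S1) (subsetP hs x) => //= ->.
  + by [].
  + split; [|split].
    * apply/subsetP => x; rewrite /reduct /= inE => /andP[xn xS].
      by apply: key.
    * move=> a b; rewrite !inE => /andP[_ aS] /andP[_ bS].
      rewrite att_red; apply/negP => /and3P[_ _ h].
      by move: (cf a b aS bS); rewrite h.
    * move=> b; rewrite inE => /andP[bn bS] a; rewrite att_red => /and3P[ha hb hab].
      have [c cS hca] := dS b bS a hab.
      have cn : c \notin S1.
        apply/negP => cS1; move: ha; rewrite in_red => /and3P[_ /existsP hne' _].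
        by apply: hne'; exists c; rewrite cS1.
      exists c; first by rewrite inE cn.
      by rewrite att_red key // ha.
- case=> [->|[S1 [S2 [-> hi [hs2 [cf2 d2]]]]]].
    split; first exact: sub0set.
    by split=> [a b|b]; rewrite in_set0.
  have [[hs1 [cf1 d1]] _] := hi.
  have s2r : forall x, x \in S2 -> x \in args F :\: (S1 :|: splus F S1).
    by move=> x /(subsetP hs2).
  have nos1 : forall b a, b \in S2 -> a \in S1 -> ~~ attacks F a b.
    move=> b a bS aS; apply/negP => hab.
    move: (s2r b bS); rewrite in_red => /and3P[_ /existsP h _].
    by apply: h; exists a; rewrite aS.
  split; [|split].
  + by rewrite subUset hs1 /=; apply: subset_trans hs2 _; apply: subsetDl.
  + move=> a b; rewrite !inE => /orP[aS|aS] /orP[bS|bS].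
    * exact: cf1.
    * exact: nos1.
    * apply/negP => hab.
      have [c cS hca] := d1 b bS a hab.
      move: (s2r a aS); rewrite in_red => /and3P[_ /existsP h _].
      by apply: h; exists c; rewrite cS.
    * have := cf2 a b aS bS; rewrite att_red (s2r a aS) (s2r b bS) //.
  + move=> b; rewrite inE => /orP[bS|bS] a hab.
    * have [c cS hca] := d1 b bS a hab.
      by exists c; rewrite ?inE ?cS.
    * case: (boolP [exists c in S1, attacks F c a]) => [/existsP[c /andP[cS hca]]|hn].
        by exists c; rewrite ?inE ?cS.
      case: (boolP (a \in S1)) => ha.
        by move: (nos1 b a bS ha); rewrite hab.
      have ar : a \in args F :\: (S1 :|: splus F S1).
        by rewrite in_red ha hn /=; case/andP: (@att_args T F a b hab).
      have [c cS hca] := d2 b bS a (ltac:(by rewrite att_red ar s2r)).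
      exists c; first by rewrite inE cS orbT.
      by move: hca; rewrite att_red => /and3P[].
Qed.
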